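(* Fix $k$ and let $C(m)=\binom{2m}{m+k}$ and $C_L(m)=\frac{1}{4^m}\binom{2m}{m+k}$, regarded as functions of $m$. For $j\ge1$ let $$\Delta_j(m)=(-1)^j\big[2^j\psi^{(j-1)}(2m+1)-\psi^{(j-1)}(m+1+k)-\psi^{(j-1)}(m+1-k)\big],$$ and define $x_0(m)=1$, $x_1(m)=0$, and $x_j(m)=\sum_{l=0}^{j-2}\binom{j-1}{l}\Delta_{j-l}(m)x_l(m)$ for $j\ge2$. Then for every $p\in\mathbb{N}_0$ and every $m$ at which these quantities are defined, $$C^{(p)}(m)=(-1)^p\binom{2m}{m+k}\sum_{i=0}^{p}\binom{p}{i}\Delta_1(m)^{p-i}x_i(m)$$ and $$C_L^{(p)}(m)=(-1)^p\binom{2m}{m+k}\sum_{i=0}^{p}\binom{p}{i}\big(\Delta_1(m)+\log 4\big)^{p-i}x_i(m).$$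
   Context: The binomial coefficient is defined via the gamma function: $\binom{2m}{m+k}=\frac{\Gamma(2m+1)}{\Gamma(m+k+1)\Gamma(m-k+1)}$. $\psi^{(n)}(z)=\frac{d^{n+1}}{dz^{n+1}}\log\Gamma(z)$ is the polygamma function. The identities are asserted at values of $m$ where none of $2m+1$, $m+1+k$, $m+1-k$ is a non-positive integer, so that all gamma and polygamma values involved are finite. *)

(* Defs.v *)
From Stdlib Require Import Reals Factorial.
From Coquelicot Require Import Coquelicot.
Open Scope R_scope.

(* Euler's Gamma function via the Gauss limit formula
     Gamma(x) = lim_{n->oo} n! n^x / (x (x+1) ... (x+n)),
   valid (and the standard definition) for every real x that is not a
   non-positive integer. *)
Fixpoint poch (x : R) (n : nat) : R :=
  match n with
  | O => x
  | S n' => poch x n' * (x + INR (S n'))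
  end.

Definition gauss_term (x : R) (n : nat) : R :=
  INR (fact n) * Rpower (INR n) x
  / poch x n.

Definition Gamma (x : R) : R := real (Lim_seq (gauss_term x)).

(* Polygamma psi^(n)(z) = d^(n+1)/dz^(n+1) log Gamma(z);
   log |Gamma| has the same derivatives as log Gamma (where Gamma < 0 the
   real logarithm of Gamma is taken as log|Gamma|). *)
Definition polygamma (n : nat) (z : R) : R :=
  Derive_n (fun t => ln (Rabs (Gamma t))) (S n) z.

Definition binomR (a b : R) : R :=
  Gamma (a + 1) / (Gamma (b + 1) * Gamma (a - b + 1)).

Definition Delta_j (k m : R) (j : nat) : R :=
  (-1) ^ j * (2 ^ j * polygamma (j - 1) (2 * m + 1)
              - polygamma (j - 1) (m + 1 + k)
              - polygamma (j - 1) (m + 1 - k)).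

Fixpoint xaux (D : nat -> R) (fuel j : nat) {struct fuel} : R :=
  match fuel with
  | O => 1
  | S f =>
      match j with
      | O => 1
      | S O => 0
      | S (S j') =>
          sum_n (fun l => Binomial.C (S j') l * D (S (S j') - l)%nat * xaux D f l) j'
      end
  end.

Definition xseq (D : nat -> R) (j : nat) : R := xaux D j j.

Definition Cfun (k : R) (t : R) : R := binomR (2 * t) (t + k).
Definition CLfun (k : R) (t : R) : R := binomR (2 * t) (t + k) / Rpower 4 t.

(* Main.v *)
Require Import Defs.
From Stdlib Require Import Reals.
From Coquelicot Require Import Coquelicot.
Open Scope R_scope.
From Stdlib Require Import Lra Lia.

Ltac rfix := match goal with |- ?a = ?b => change (@eq R a b) end;
  unfold plus; simpl.

Lemma sumn_shift0 (w : nat -> R) (N : nat) :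
  sum_n w (S N) = w O + sum_n (fun i => w (S i)) N.
Proof.
  unfold sum_n. rewrite sum_Sn_m; [|lia]. rewrite <- sum_n_m_S. reflexivity.
Qed.

Lemma leib_id (f g : nat -> R) (N : nat) :
  sum_n (fun i => Binomial.C N i * (f (S i) * g (N - i)%nat + f i * g (S (N - i)))) N
  = sum_n (fun i => Binomial.C (S N) i * f i * g (S N - i)%nat) (S N).
Proof.
  set (w := fun i => match i with O => 0 | S i' => Binomial.C N i' * f i * g (S N - i)%nat end).
  set (v := fun i => if (i <=? N)%nat then Binomial.C N i * f i * g (S N - i)%nat else 0).
  transitivity (sum_n w (S N) + sum_n v (S N)).
  - rewrite sumn_shift0. rewrite sum_Sn.
    unfold v at 2. replace (S N <=? N)%nat with false by (symmetry; apply Nat.leb_gt; lia).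
    change (plus (sum_n v N) 0) with (sum_n v N + 0).
    simpl (w O). rewrite Rplus_0_l, Rplus_0_r.
    change (sum_n (fun i => w (S i)) N + sum_n v N) with
      (plus (sum_n (fun i => w (S i)) N) (sum_n v N)).
    rewrite <- sum_n_plus.
    apply sum_n_ext_loc. intros i Hi. unfold w, v.
    replace (i <=? N)%nat with true by (symmetry; apply Nat.leb_le; lia).
    replace (S N - S i)%nat with (N - i)%nat by lia.
    replace (S N - i)%nat with (S (N - i)) by lia.
    rfix. ring.
  - transitivity (sum_n (fun i => w i + v i) (S N)).
    { symmetry. exact (sum_n_plus w v (S N)). }
    apply sum_n_ext_loc. intros i Hi. unfold w, v.
    change (@plus R_AbelianMonoid) with Rplus.
    destruct i as [|i].
    + simpl (0 <=? N)%nat. rewrite !C_n_0. rfix; ring.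
    + destruct (Nat.eq_dec i N) as [->|Hne].
      * replace (S N <=? N)%nat with false by (symmetry; apply Nat.leb_gt; lia).
        rewrite !C_n_n. rfix; ring.
      * replace (S i <=? N)%nat with true by (symmetry; apply Nat.leb_le; lia).
        rewrite <- pascal by lia. rfix; ring.
Qed.
Ltac rring := match goal with |- ?a = ?b => change (@eq R a b) end; ring.
Ltac rfld := match goal with |- ?a = ?b => change (@eq R a b) end; field.
Lemma is_derive_eq (f : R -> R) x l l' : is_derive f x l -> l = l' -> is_derive f x l'.
Proof. intros H ->; exact H. Qed.

Lemma is_derive_Rmult (f g : R -> R) x df dg :
  is_derive f x df -> is_derive g x dg ->
  is_derive (fun t => f t * g t) x (df * g x + f x * dg).
Proof. intros Hf Hg. apply (is_derive_mult f g x df dg Hf Hg). intros; apply Rmult_comm. Qed.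

Lemma is_derive_Rplus (f g : R -> R) x df dg :
  is_derive f x df -> is_derive g x dg ->
  is_derive (fun t => f t + g t) x (df + dg).
Proof. intros Hf Hg. apply (is_derive_plus f g x df dg Hf Hg). Qed.

Lemma is_derive_Rminus (f g : R -> R) x df dg :
  is_derive f x df -> is_derive g x dg ->
  is_derive (fun t => f t - g t) x (df - dg).
Proof. intros Hf Hg. apply (is_derive_minus f g x df dg Hf Hg). Qed.

Lemma is_derive_Rconst (a x : R) : is_derive (fun _ => a) x 0.
Proof. apply (is_derive_const a x). Qed.

Lemma is_derive_Rid (x : R) : is_derive (fun t => t) x 1.
Proof. apply (is_derive_id x). Qed.

Lemma is_derive_Rcomp (f g : R -> R) x df dg :
  is_derive f (g x) df -> is_derive g x dg ->
  is_derive (fun t => f (g t)) x (dg * df).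
Proof. intros Hf Hg. apply (is_derive_comp f g x df dg Hf Hg). Qed.

Definition Dseq (f : nat -> R -> R) (U : R -> Prop) :=
  forall n x, U x -> is_derive (f n) x (f (S n) x).

Lemma Dseq_Derive_n f U : open U -> Dseq f U ->
  forall n x, U x -> Derive_n (f O) n x = f n x.
Proof.
  intros HU Hf n. induction n as [|n IH]; intros x Hx; [reflexivity|].
  simpl. rewrite (Derive_ext_loc _ (f n)).
  - apply is_derive_unique. apply Hf; exact Hx.
  - apply (locally_open U); auto.
Qed.

Lemma leib_step (f g : nat -> R -> R) N x :
  (forall i, (i <= N)%nat -> is_derive (f i) x (f (S i) x)) ->
  (forall i, (i <= N)%nat -> is_derive (g i) x (g (S i) x)) ->
  is_derive (fun t => sum_n (fun i => Binomial.C N i * f i t * g (N - i)%nat t) N) x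
    (sum_n (fun i => Binomial.C (S N) i * f i x * g (S N - i)%nat x) (S N)).
Proof.
  intros Hf Hg. 
  rewrite <- (leib_id (fun i => f i x) (fun i => g i x)). 
  apply (is_derive_sum_n (K:=R_AbsRing) (V:=R_NormedModule)
    (fun i t => Binomial.C N i * f i t * g (N - i)%nat t)). intros i Hi. 
  apply (is_derive_eq _ _ (Binomial.C N i * (f (S i) x * g (N - i)%nat x + f i x * g (S (N - i)%nat) x))).
  - apply (is_derive_ext (fun t => Binomial.C N i * (f i t * g (N - i)%nat t))).
    { intros t. rring. }
    apply is_derive_scal. apply is_derive_Rmult.
    + apply Hf. lia.
    + apply Hg. lia.
  - rring.
Qed.
Lemma Dseq_mult f g U : Dseq f U -> Dseq g U ->
  Dseq (fun n t => sum_n (fun i => Binomial.C n i * f i t * g (n - i)%nat t) n) U.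
Proof.
  intros Hf Hg n x Hx.
  eapply is_derive_ext; [|apply leib_step; intros; [apply Hf|apply Hg]; auto].
  intros t. apply sum_n_ext_loc. intros i Hi. rring.
Qed.

Lemma Dseq_plus f g U : Dseq f U -> Dseq g U -> Dseq (fun n t => f n t + g n t) U.
Proof. intros Hf Hg n x Hx. apply is_derive_Rplus; auto. Qed.

Lemma Dseq_minus f g U : Dseq f U -> Dseq g U -> Dseq (fun n t => f n t - g n t) U.
Proof. intros Hf Hg n x Hx. apply is_derive_Rminus; auto. Qed.

Lemma Dseq_sub f U V : Dseq f U -> (forall x, V x -> U x) -> Dseq f V.
Proof. intros Hf HV n x Hx. apply Hf; auto. Qed.

Lemma is_derive_aff (a b x : R) : is_derive (fun t => a * t + b) x a.
Proof.
  apply (is_derive_eq _ _ (a * 1 + 0)). apply is_derive_Rplus.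
  apply is_derive_scal, is_derive_Rid. apply is_derive_Rconst. rring.
Qed.

Lemma Dseq_affine f U a b : Dseq f U ->
  Dseq (fun n t => a ^ n * f n (a * t + b)) (fun t => U (a * t + b)).
Proof.
  intros Hf n x Hx. apply (is_derive_eq _ _ (a ^ n * (a * f (S n) (a * x + b)))).
  - apply is_derive_scal. apply (is_derive_Rcomp (f n) (fun t => a * t + b)).
    + apply Hf; exact Hx.
    + apply is_derive_aff.
  - simpl. rring.
Qed.

Lemma Dseq_expaff (a m : R) U :
  Dseq (fun n t => a ^ n * exp (a * (t - m))) U.
Proof.
  intros n x _. apply (is_derive_eq _ _ (a ^ n * (a * exp (a * (x - m))))).
  - apply is_derive_scal. apply (is_derive_Rcomp exp (fun t => a * (t - m))).
    + apply is_derive_exp.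
    + apply (is_derive_ext (fun t => a * t + (- a * m))). intros; rring. apply is_derive_aff.
  - simpl. rring.
Qed.

Definition linseq (a m : R) (n : nat) (t : R) : R :=
  match n with O => a * (t - m) | S O => a | _ => 0 end.

Lemma Dseq_lin a m U : Dseq (linseq a m) U.
Proof.
  intros [|[|n]] x _; unfold linseq; simpl.
  - apply (is_derive_ext (fun t => a * t + (- a * m))). intros; rring. apply is_derive_aff.
  - apply is_derive_Rconst.
  - apply is_derive_Rconst.
Qed.

(* exponential of a Dseq *)
Fixpoint Eaux (M : nat -> R -> R) (fu n : nat) (t : R) : R :=
  match fu with
  | O => exp (M O t)
  | S f => match n with
           | O => exp (M O t)
           | S n' => sum_n (fun l => Binomial.C n' l * Eaux M f l t * M (S (n' - l)) t) n'
           end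
  end.

Definition Eexp M n t := Eaux M n n t.

Lemma Eaux_fuel M : forall f1 f2 n t, (n <= f1)%nat -> (n <= f2)%nat ->
  Eaux M f1 n t = Eaux M f2 n t.
Proof.
  induction f1 as [|f1 IH]; intros f2 n t H1 H2.
  - assert (n = O) by lia. subst. destruct f2; reflexivity.
  - destruct f2 as [|f2]; [assert (n = O) by lia; subst; reflexivity|].
    destruct n as [|n]; [reflexivity|]. simpl.
    apply sum_n_ext_loc. intros l Hl. rewrite (IH f2 l t) by lia. reflexivity.
Qed.

Lemma Eexp_S M n t : Eexp M (S n) t =
  sum_n (fun l => Binomial.C n l * Eexp M l t * M (S (n - l)) t) n.
Proof.
  unfold Eexp. simpl. apply sum_n_ext_loc. intros l Hl.
  rewrite (Eaux_fuel M n l l t) by lia. reflexivity.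
Qed.

Lemma Dseq_Eexp M U : Dseq M U -> Dseq (Eexp M) U.
Proof.
  intros HM n. induction n as [n IH] using (well_founded_induction Wf_nat.lt_wf).
  intros x Hx. destruct n as [|n].
  - apply (is_derive_eq _ _ (M 1%nat x * exp (M O x))).
    apply (is_derive_Rcomp exp (M O)). apply is_derive_exp. apply HM, Hx.
    rewrite Eexp_S. rewrite sum_O. unfold Eexp. simpl. rewrite C_n_0. rring.
  - eapply is_derive_ext. { intros t. symmetry. apply Eexp_S. }
    rewrite Eexp_S.
    eapply is_derive_eq.
    + apply (leib_step (Eexp M) (fun j => M (S j)) n x).
      * intros i Hi. apply IH; [lia|exact Hx].
      * intros i Hi. apply HM, Hx.
    + apply sum_n_ext_loc. intros l Hl. reflexivity.
Qed.

Lemma Eexp_0 M t : Eexp M O t = exp (M O t).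
Proof. reflexivity. Qed.

Lemma xaux_fuel D : forall f1 f2 n, (n <= f1)%nat -> (n <= f2)%nat ->
  xaux D f1 n = xaux D f2 n.
Proof.
  induction f1 as [|f1 IH]; intros f2 n H1 H2.
  - assert (n = O) by lia. subst. destruct f2; reflexivity.
  - destruct f2 as [|f2]; [assert (n = O) by lia; subst; reflexivity|].
    destruct n as [|[|n]]; try reflexivity. simpl.
    apply sum_n_ext_loc. intros l Hl. rewrite (IH f2 l) by lia. reflexivity.
Qed.

Lemma xseq_SS D j : xseq D (S (S j)) =
  sum_n (fun l => Binomial.C (S j) l * D (S (S j) - l)%nat * xseq D l) j.
Proof.
  unfold xseq.
  change (xaux D (S (S j)) (S (S j))) with
    (sum_n (fun l => Binomial.C (S j) l * D (S (S j) - l)%nat * xaux D (S j) l) j).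
  apply sum_n_ext_loc. intros l Hl.
  rewrite (xaux_fuel D (S j) l l) by lia. reflexivity.
Qed.

Lemma pow_m1_split n i : (i <= n)%nat -> (-1) ^ i * (-1) ^ (n - i) = (-1) ^ n.
Proof. intros H. rewrite <- pow_add. f_equal. lia. Qed.

Lemma Eexp_at M m (Dl : nat -> R) : M 1%nat m = 0 ->
  (forall j, (2 <= j)%nat -> M j m = (-1) ^ j * Dl j) ->
  forall n, Eexp M n m = exp (M O m) * ((-1) ^ n * xseq Dl n).
Proof.
  intros H1 Hj n. induction n as [n IH] using (well_founded_induction Wf_nat.lt_wf).
  destruct n as [|[|j]].
  - unfold Eexp, xseq. simpl. ring.
  - rewrite Eexp_S, sum_O. unfold Eexp, xseq; simpl. rewrite H1. ring.
  - rewrite Eexp_S, sum_Sn. rewrite xseq_SS.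
    replace (S j - S j)%nat with O by lia. rewrite H1.
    change (plus ?a ?b) with (a + b). rewrite Rmult_0_r, Rplus_0_r.
    rewrite <- !(sum_n_mult_l (K:=R_Ring)).
    apply sum_n_ext_loc. intros l Hl.
    rewrite IH by lia.
    replace (S (S j - l)) with (S (S j) - l)%nat by lia.
    rewrite (Hj (S (S j) - l)%nat) by lia.
    repeat change (mult ?a ?b) with (a * b).
    rewrite <- (pow_m1_split (S (S j)) l) by lia. rring.
Qed.

Lemma exp_formula (L : nat -> R -> R) U m p (Dl : nat -> R) D1 :
  open U -> U m -> Dseq L U -> L 1%nat m = - D1 ->
  (forall j, (2 <= j)%nat -> L j m = (-1) ^ j * Dl j) ->
  Derive_n (fun t => exp (L O t)) p m =
  exp (L O m) * ((-1) ^ p * sum_n (fun i => Binomial.C p i * D1 ^ (p - i) * xseq Dl i) p).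
Proof.
  intros HU Hm HL H1 Hj.
  set (a := - D1).
  set (M := fun n t => L n t - linseq a m n t).
  assert (HM : Dseq M U) by (apply Dseq_minus; [exact HL| apply Dseq_lin]).
  assert (HG : Dseq (Eexp M) U) by (apply Dseq_Eexp; exact HM).
  set (P := fun n t => a ^ n * exp (a * (t - m))).
  assert (HP : Dseq P U) by apply Dseq_expaff.
  pose proof (Dseq_mult _ _ U HG HP) as HH.
  rewrite (Derive_n_ext _ (fun t => sum_n (fun i => Binomial.C O i * Eexp M i t * P (O - i)%nat t) O)).
  2:{ intros t. rewrite sum_O. unfold P, M, Eexp. simpl. unfold linseq.
      rewrite C_n_0, !Rmult_1_l, <- exp_plus. f_equal. ring. }
  rewrite (Dseq_Derive_n _ U HU HH p m Hm).
  rewrite <- !(sum_n_mult_l (K:=R_Ring)).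
  apply sum_n_ext_loc. intros i Hi.
  rewrite (Eexp_at M m Dl).
  2:{ unfold M, linseq, a. rewrite H1. ring. }
  2:{ intros j Hj2. unfold M, linseq. destruct j as [|[|j]]; try lia. rewrite Hj by lia. ring. }
  replace (M O m) with (L O m) by (unfold M, linseq; ring).
  unfold P, a. replace (m - m) with 0 by ring. rewrite Rmult_0_r, exp_0.
  repeat change (mult ?a ?b) with (a * b).
  rewrite <- (pow_m1_split p i Hi).
  replace (- D1) with ((-1) * D1) by ring. rewrite Rpow_mult_distr. rring.
Qed.

Lemma ln0 : ln 0 = 0.
Proof. unfold ln. destruct (Rlt_dec 0 0) as [h|h]; [exfalso; exact (Rlt_irrefl 0 h)|reflexivity]. Qed.

Lemma derive_cont (f : R -> R) x l : is_derive f x l -> continuity_pt f x.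
Proof.
  intros H. apply continuity_pt_filterlim. apply (ex_derive_continuous f x). exists l; exact H.
Qed.

Lemma lnbound u : Rabs u <= / 2 -> Rabs (ln (1 + u) - u) <= 2 * u ^ 2.
Proof.
  intros Hu.
  assert (Hu2: -/2 <= u <= /2) by (revert Hu; unfold Rabs; destruct (Rcase_abs u); intros; split; lra).
  clear Hu.
  assert (Hd : forall v, Rabs v < 1 -> is_derive (fun v => ln (1 + v) - v) v (- v / (1 + v))).
  { intros v Hv. apply Rabs_def2 in Hv.
    apply (is_derive_eq _ _ (1 * / (1 + v) - 1)).
    - apply is_derive_Rminus; [|apply is_derive_Rid].
      apply (is_derive_Rcomp ln (fun v => 1 + v)).
      + apply is_derive_ln. lra.
      + apply (is_derive_ext (fun t => 1 * t + 1)). intros; rring. apply is_derive_aff.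
    - match goal with |- ?a = ?b => change (@eq R a b) end. field. lra. }
  destruct (MVT_gen (fun v => ln (1 + v) - v) 0 u (fun v => - v / (1 + v))) as [c [Hc Heq]].
  - intros x Hx. apply Hd. revert Hx. unfold Rmin, Rmax.
    destruct (Rle_dec 0 u); intros; apply Rabs_def1; lra.
  - intros x Hx. apply (derive_cont _ _ (- x / (1 + x))). apply Hd. revert Hx. unfold Rmin, Rmax.
    destruct (Rle_dec 0 u); intros; apply Rabs_def1; lra.
  - revert Heq. replace (1 + 0) with 1 by ring. rewrite ln_1. intros Heq.
    replace (ln (1 + u) - u) with (- c / (1 + c) * (u - 0)) by lra.
    assert (Hcu : Rabs c <= Rabs u /\ -/2 <= c <= /2).
    { revert Hc. unfold Rmin, Rmax. destruct (Rle_dec 0 u); intros;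
      (split; [unfold Rabs; destruct (Rcase_abs c); destruct (Rcase_abs u); lra | lra]). }
    destruct Hcu as [Hcu Hc2].
    assert (Hk : Rabs (- c / (1 + c)) <= 2 * Rabs u).
    { rewrite Rabs_div by lra. rewrite Rabs_Ropp, (Rabs_right (1 + c)) by lra.
      apply (Rmult_le_reg_r (1 + c)); [lra|]. unfold Rdiv.
      rewrite Rmult_assoc, Rinv_l by lra. pose proof (Rabs_pos c). nra. }
    rewrite Rabs_mult. replace (u - 0) with u by ring.
    replace (2 * u ^ 2) with ((2 * Rabs u) * Rabs u).
    + apply Rmult_le_compat_r; [apply Rabs_pos|exact Hk].
    + rewrite <- (pow2_abs u). ring.
Qed.

Lemma tail_inv2 m n : (1 <= m)%nat -> (m <= n)%nat ->
  sum_n_m (fun j => / INR j ^ 2) (S m) n <= / INR m - / INR n.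
Proof.
  intros Hm. induction n as [|n IH]; intros Hn; [lia|].
  destruct (Nat.eq_dec m (S n)) as [->|Hne].
  - rewrite sum_n_m_zero by lia. change zero with 0. lra.
  - rewrite sum_n_Sm by lia. change (plus ?a ?b) with (a + b).
    assert (H1 : 1 <= INR n) by (apply (le_INR 1); lia).
    assert (H2 : 1 <= INR m) by (apply (le_INR 1); lia).
    specialize (IH ltac:(lia)). rewrite S_INR in *.
    assert (/ (INR n + 1) ^ 2 <= / INR n - / (INR n + 1)).
    { replace (/ INR n - / (INR n + 1)) with (/ (INR n * (INR n + 1))) by (field; lra).
      apply Rinv_le_contravar. nra. nra. }
    lra.
Qed.

Lemma sum_n_m_le_loc (a b : nat -> R) n m :
  (forall k, (n <= k <= m)%nat -> a k <= b k) -> sum_n_m a n m <= sum_n_m b n m.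
Proof.
  intros H. destruct (Compare_dec.le_lt_dec n m) as [Hnm|Hnm].
  2:{ rewrite !sum_n_m_zero by lia. lra. }
  induction m as [|m IH].
  - assert (n = O) by lia. subst. rewrite !sum_n_n. apply H; lia.
  - destruct (Nat.eq_dec n (S m)) as [->|Hne].
    + rewrite !sum_n_n. apply H; lia.
    + rewrite !sum_n_Sm by lia. change (plus ?a ?b) with (a + b).
      apply Rplus_le_compat; [apply IH|apply H]; intros; try apply H; lia.
Qed.

Lemma ucauchy (a : nat -> R -> R) (D : R -> Prop) K J :
  0 <= K -> (1 <= J)%nat ->
  (forall j x, (J <= j)%nat -> D x -> Rabs (a j x) <= K / INR j ^ 2) ->
  CVU_cauchy (fun n x => sum_n (fun j => a j x) n) D.
Proof.
  intros HK HJ Hb eps.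
  destruct (INR_unbounded (K / eps)) as [N0 HN0].
  exists (max J (S N0)). intros n m x Hx Hn Hm.
  assert (HNpos : 0 < INR (max J (S N0))) by (apply lt_0_INR; lia).
  assert (HN0' : K / eps < INR (max J (S N0))).
  { apply (Rlt_le_trans _ (INR N0)); [lra|]. apply le_INR. lia. }
  assert (key : forall p q, (max J (S N0) <= p)%nat -> (p <= q)%nat ->
     Rabs (sum_n (fun j => a j x) q - sum_n (fun j => a j x) p) < eps).
  { intros p q Hp Hpq.
    destruct (Nat.eq_dec p q) as [->|Hne].
    { replace (_ - _) with 0 by ring. rewrite Rabs_R0. apply cond_pos. }
    rewrite <- (sum_n_m_sum_n (G:=R_AbelianGroup)) by lia.
    eapply Rle_lt_trans. apply (norm_sum_n_m (K:=R_AbsRing) (V:=R_NormedModule)).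
    eapply Rle_lt_trans. apply (sum_n_m_le_loc _ (fun j => K * / INR j ^ 2)).
    { intros k Hk. apply Hb; [lia|exact Hx]. }
    eapply Rle_lt_trans.
    { apply Req_le. apply (sum_n_m_mult_l (K:=R_Ring) K (fun j => / INR j ^ 2)). }
    change (mult K ?b) with (K * b).
    eapply Rle_lt_trans.
    { apply Rmult_le_compat_l; [exact HK|]. apply tail_inv2; lia. }
    assert (HpN : INR (max J (S N0)) <= INR p) by (apply le_INR; lia).
    assert (0 < / INR q) by (apply Rinv_0_lt_compat, lt_0_INR; lia).
    apply (Rle_lt_trans _ (K * / INR p)).
    { apply Rmult_le_compat_l; lra. }
    apply (Rle_lt_trans _ (K * / INR (max J (S N0)))).
    { apply Rmult_le_compat_l; [lra|]. apply Rinv_le_contravar; lra. }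
    assert (Heps := cond_pos eps).
    apply (Rmult_lt_reg_r (INR (max J (S N0)))); [lra|].
    rewrite Rmult_assoc, Rinv_l by lra.
    apply (Rmult_lt_reg_l (/ eps)). apply Rinv_0_lt_compat; lra.
    replace (/ eps * (K * 1)) with (K / eps) by (field; lra).
    replace (/ eps * (eps * INR (max J (S N0)))) with (INR (max J (S N0))) by (field; lra).
    exact HN0'. }
  destruct (Compare_dec.le_lt_dec m n).
  - apply key; lia.
  - rewrite Rabs_minus_sym. apply key; lia.
Qed.

Lemma is_derive_lnabs y : y <> 0 -> is_derive (fun t => ln (Rabs t)) y (/ y).
Proof.
  intros Hy. apply (is_derive_eq _ _ ((sign y * 1) * / Rabs y)).
  - apply (is_derive_Rcomp ln (fun t => Rabs t)).
    + apply is_derive_ln. apply Rabs_pos_lt, Hy.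
    + apply (is_derive_Rabs (fun t => t)); [apply is_derive_Rid|exact Hy].
  - destruct (Rlt_or_le 0 y) as [H|H].
    + rewrite sign_eq_1, Rabs_right by lra. rfld. lra.
    + rewrite sign_eq_m1, Rabs_left by lra. rfld. lra.
Qed.

Definition aterm (k j : nat) (x : R) : R :=
  match k with
  | O => x * ln (1 + / INR j) - ln (Rabs (x + INR j)) + ln (INR j)
  | S O => ln (1 + / INR j) - / (x + INR j)
  | S (S k') => (-1) ^ k * INR (Factorial.fact (S k')) * (/ (x + INR j)) ^ k
  end.

Lemma is_derive_invsh (c x : R) : x + c <> 0 ->
  is_derive (fun t => / (t + c)) x (- (/ (x + c)) ^ 2).
Proof.
  intros H. apply (is_derive_eq _ _ (- 1 / (x + c) ^ 2)).
  - apply (is_derive_inv (fun t => t + c)); [|exact H].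
    apply (is_derive_ext (fun t => 1 * t + c)). intros; rring. apply is_derive_aff.
  - rfld. exact H.
Qed.

Lemma aterm_deriv k j x : x + INR j <> 0 -> is_derive (aterm k j) x (aterm (S k) j x).
Proof.
  intros H. destruct k as [|[|k]]; cbn beta iota delta [aterm].
  - apply (is_derive_eq _ _ (ln (1 + / INR j) * 1 - / (x + INR j) + 0)).
    + apply is_derive_Rplus; [|apply is_derive_Rconst].
      apply is_derive_Rminus.
      * apply (is_derive_ext (fun t => ln (1 + / INR j) * t + 0)). intros; rring.
        apply (is_derive_eq _ _ (ln (1 + / INR j))). apply is_derive_aff. rring.
      * apply (is_derive_eq _ _ (1 * / (x + INR j))).
        apply (is_derive_Rcomp (fun t => ln (Rabs t)) (fun t => t + INR j)).
        apply is_derive_lnabs, H.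
        apply (is_derive_ext (fun t => 1 * t + INR j)). intros; rring. apply is_derive_aff.
        rring.
    + rring.
  - apply (is_derive_eq _ _ (0 - - (/ (x + INR j)) ^ 2)).
    + apply is_derive_Rminus; [apply is_derive_Rconst|]. apply is_derive_invsh, H.
    + simpl. rring.
  - set (u := / (x + INR j)).
    apply (is_derive_eq _ _ ((-1) ^ S (S k) * INR (Factorial.fact (S k)) *
       (INR (S (S k)) * (- u ^ 2) * u ^ Nat.pred (S (S k))))).
    + apply is_derive_scal. apply (is_derive_pow (fun t => / (t + INR j))).
      apply is_derive_invsh, H.
    + change (Factorial.fact (S (S k))) with (S (S k) * Factorial.fact (S k))%nat.
      rewrite mult_INR. simpl pow. simpl Nat.pred. rring.
Qed.

Definition hk (k n : nat) (x : R) : R := sum_n (fun j => aterm k j x) n.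

Lemma hk_deriv k n x : (forall j, x + INR j <> 0) -> is_derive (hk k n) x (hk (S k) n x).
Proof.
  intros H. unfold hk.
  apply (is_derive_sum_n (K:=R_AbsRing) (V:=R_NormedModule) (fun j t => aterm k j t)).
  intros j _. apply aterm_deriv, H.
Qed.

Lemma Rabs_le_b x a : Rabs x <= a -> - a <= x <= a.
Proof. unfold Rabs; destruct (Rcase_abs x); intros; split; lra. Qed.

Lemma basic_bounds R0 j x : 1 <= R0 -> 2 * R0 + 2 <= INR j -> Rabs x <= R0 ->
     0 < INR j /\ INR j / 2 <= x + INR j /\ Rabs (/ INR j) <= / 2 /\ Rabs (x / INR j) <= / 2
     /\ x ^ 2 <= R0 ^ 2.
Proof.
  intros HR0 Hj Hx. pose proof (Rabs_pos x).
  assert (-R0 <= x <= R0) by (apply Rabs_le_b; exact Hx).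
  assert (0 < INR j) by lra.
  assert (0 < / INR j) by (apply Rinv_0_lt_compat; lra).
  split; [lra|]. split; [lra|]. split.
  - rewrite Rabs_right by lra. apply Rinv_le_contravar; lra.
  - split.
    + unfold Rdiv. rewrite Rabs_mult, (Rabs_right (/ INR j)) by lra.
      apply (Rmult_le_reg_r (INR j)); [lra|]. rewrite Rmult_assoc, Rinv_l by lra. lra.
    + rewrite <- (pow2_abs x). apply pow_incr. lra.
Qed.

Lemma aterm_bound k R0 : 1 <= R0 -> exists K, 0 <= K /\
  forall j x, 2 * R0 + 2 <= INR j -> Rabs x <= R0 -> Rabs (aterm k j x) <= K / INR j ^ 2.
Proof.
  intros HR0. destruct k as [|[|k]].
  - exists (2 * R0 + 2 * R0 ^ 2). split; [nra|].
    intros j x Hj Hx.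
    destruct (basic_bounds R0 j x HR0 Hj Hx) as [Hr [Hxr [Hi [Hxi Hx2]]]].
    cbn beta iota delta [aterm].
    rewrite (Rabs_right (x + INR j)) by lra.
    replace (x + INR j) with (INR j * (1 + x / INR j)) by (field; lra).
    pose proof (Rabs_le_b _ _ Hxi).
    rewrite ln_mult by lra.
    replace (x * ln (1 + / INR j) - (ln (INR j) + ln (1 + x / INR j)) + ln (INR j))
      with (x * (ln (1 + / INR j) - / INR j) - (ln (1 + x / INR j) - x / INR j))
      by (field; lra).
    pose proof (lnbound _ Hi) as B1. pose proof (lnbound _ Hxi) as B2.
    eapply Rle_trans. apply Rabs_triang. rewrite Rabs_Ropp, Rabs_mult.
    assert (E1 : (/ INR j) ^ 2 = 1 / INR j ^ 2) by (field; lra).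
    assert (E2 : (x / INR j) ^ 2 = x ^ 2 / INR j ^ 2) by (field; lra).
    rewrite E1 in B1. rewrite E2 in B2.
    assert (0 < INR j ^ 2) by (apply pow_lt; lra).
    assert (Rabs x * Rabs (ln (1 + / INR j) - / INR j) <= R0 * (2 * (1 / INR j ^ 2))).
    { apply Rmult_le_compat; try apply Rabs_pos; assumption. }
    assert (2 * (x ^ 2 / INR j ^ 2) <= 2 * (R0 ^ 2 / INR j ^ 2)).
    { apply Rmult_le_compat_l; [lra|]. unfold Rdiv. apply Rmult_le_compat_r; [|lra].
      apply Rlt_le, Rinv_0_lt_compat; lra. }
    replace ((2 * R0 + 2 * R0 ^ 2) / INR j ^ 2) with
      (R0 * (2 * (1 / INR j ^ 2)) + 2 * (R0 ^ 2 / INR j ^ 2)) by (field; lra).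
    lra.
  - exists (2 + 2 * R0). split; [lra|].
    intros j x Hj Hx.
    destruct (basic_bounds R0 j x HR0 Hj Hx) as [Hr [Hxr [Hi [Hxi Hx2]]]].
    cbn beta iota delta [aterm].
    replace (ln (1 + / INR j) - / (x + INR j)) with
      ((ln (1 + / INR j) - / INR j) + x / (INR j * (x + INR j))) by (field; lra).
    pose proof (lnbound _ Hi) as B1.
    assert (E1 : (/ INR j) ^ 2 = 1 / INR j ^ 2) by (field; lra).
    rewrite E1 in B1.
    assert (0 < INR j ^ 2) by (apply pow_lt; lra).
    assert (B3 : Rabs (x / (INR j * (x + INR j))) <= 2 * R0 / INR j ^ 2).
    { unfold Rdiv. rewrite Rabs_mult, Rabs_Rinv by nra.
      rewrite (Rabs_right (INR j * (x + INR j))) by nra.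
      apply (Rmult_le_reg_r (INR j * (x + INR j))); [nra|].
      rewrite Rmult_assoc, Rinv_l by nra.
      replace (2 * R0 * / INR j ^ 2 * (INR j * (x + INR j))) with
        (2 * R0 * ((x + INR j) / INR j)) by (field; lra).
      assert (/ 2 <= (x + INR j) / INR j).
      { apply (Rmult_le_reg_r (INR j)); [lra|]. unfold Rdiv.
        rewrite Rmult_assoc, Rinv_l by lra. lra. }
      nra. }
    eapply Rle_trans. apply Rabs_triang.
    replace ((2 + 2 * R0) / INR j ^ 2) with (2 * (1 / INR j ^ 2) + 2 * R0 / INR j ^ 2)
      by (field; lra).
    lra.
  - exists (4 * INR (Factorial.fact (S k))). split.
    { pose proof (INR_fact_lt_0 (S k)). lra. }
    intros j x Hj Hx.
    destruct (basic_bounds R0 j x HR0 Hj Hx) as [Hr [Hxr [Hi [Hxi Hx2]]]].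
    cbn beta iota delta [aterm].
    pose proof (INR_fact_lt_0 (S k)).
    assert (Hu : 0 < / (x + INR j) <= 2 / INR j).
    { split. apply Rinv_0_lt_compat; lra.
      replace (2 / INR j) with (/ (INR j / 2)) by (field; lra).
      apply Rinv_le_contravar; lra. }
    assert (Hu1 : 2 / INR j <= 1).
    { apply (Rmult_le_reg_r (INR j)); [lra|]. unfold Rdiv.
      rewrite Rmult_assoc, Rinv_l by lra. lra. }
    rewrite !Rabs_mult, pow_1_abs, Rabs_right by lra.
    rewrite <- RPow_abs. rewrite (Rabs_right (/ (x + INR j))) by lra.
    set (u := / (x + INR j)) in *.
    assert (u ^ S (S k) <= u ^ 2).
    { replace (u ^ S (S k)) with (u ^ 2 * u ^ k) by (simpl; ring).
      rewrite <- (Rmult_1_r (u ^ 2)) at 2. apply Rmult_le_compat_l.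
      apply pow_le; lra. rewrite <- (pow1 k). apply pow_incr. lra. }
    assert (u ^ 2 <= 4 / INR j ^ 2).
    { replace (4 / INR j ^ 2) with ((2 / INR j) ^ 2) by (field; lra). apply pow_incr. lra. }
    replace (4 * INR (Factorial.fact (S k)) / INR j ^ 2) with
      (1 * INR (Factorial.fact (S k)) * (4 / INR j ^ 2)) by (field; lra).
    apply Rmult_le_compat_l; lra.
Qed.

Lemma delta_small x0 N : (forall n, x0 <> - INR n) ->
  exists d, 0 < d <= / 2 /\ forall j, (j < N)%nat -> 2 * d <= Rabs (x0 + INR j).
Proof.
  intros H. induction N as [|N [d [Hd Hj]]].
  - exists (/2). split; [lra|]. intros; lia.
  - assert (Hn : 0 < Rabs (x0 + INR N)).
    { apply Rabs_pos_lt. intros E. apply (H N). lra. }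
    exists (Rmin d (Rabs (x0 + INR N) / 2)). split.
    + split. apply Rmin_glb_lt; lra. pose proof (Rmin_l d (Rabs (x0 + INR N) / 2)). lra.
    + intros j Hj'. destruct (Nat.eq_dec j N) as [->|Hne].
      * pose proof (Rmin_r d (Rabs (x0 + INR N) / 2)). lra.
      * pose proof (Rmin_l d (Rabs (x0 + INR N) / 2)). specialize (Hj j ltac:(lia)). lra.
Qed.

Lemma delta_exists x0 : (forall n, x0 <> - INR n) ->
  exists d, 0 < d <= / 2 /\ forall j, 2 * d <= Rabs (x0 + INR j).
Proof.
  intros H. destruct (INR_unbounded (Rabs x0 + 1)) as [N HN].
  destruct (delta_small x0 N H) as [d [Hd Hj]].
  exists d. split; [exact Hd|]. intros j.
  destruct (Compare_dec.le_lt_dec N j) as [Hle|Hlt]; [|apply Hj; exact Hlt].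
  apply le_INR in Hle.
  pose proof (Rabs_pos x0).
  pose proof (Rabs_le_b x0 (Rabs x0) (Rle_refl _)).
  rewrite Rabs_right by lra. lra.
Qed.

Lemma poch_neq0 t n : (forall j, t + INR j <> 0) -> poch t n <> 0.
Proof.
  intros H. induction n as [|n IH].
  - specialize (H O). simpl in *. lra.
  - change (poch t (S n)) with (poch t n * (t + INR (S n))).
    apply Rmult_integral_contrapositive_currified; [exact IH|]. apply H.
Qed.

Lemma poch_pos_prod t x0 n : (forall j, 0 < (t + INR j) * (x0 + INR j)) ->
  0 < poch t n * poch x0 n.
Proof.
  intros H. induction n as [|n IH].
  - specialize (H O). simpl in *. lra.
  - change (poch t (S n)) with (poch t n * (t + INR (S n))).
    change (poch x0 (S n)) with (poch x0 n * (x0 + INR (S n))).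
    replace (poch t n * (t + INR (S n)) * (poch x0 n * (x0 + INR (S n)))) with
      ((poch t n * poch x0 n) * ((t + INR (S n)) * (x0 + INR (S n)))) by ring.
    apply Rmult_lt_0_compat; [exact IH| apply H].
Qed.

Lemma samesign a b : 0 < a * b -> a / Rabs a = b / Rabs b.
Proof.
  intros H. destruct (Rtotal_order a 0) as [Ha|[Ha|Ha]].
  - assert (b < 0) by nra. rewrite !Rabs_left by lra. field; lra.
  - subst. lra.
  - assert (0 < b) by nra. rewrite !Rabs_right by lra. field; lra.
Qed.

Lemma hk0_closed t n : (forall j, t + INR j <> 0) ->
  hk O n t = t * ln (INR n + 1) - ln (Rabs (poch t n)) + ln (INR (Factorial.fact n)).
Proof.
  intros H. induction n as [|n IH].
  - unfold hk. rewrite sum_O. cbn beta iota delta [aterm]. change (poch t 0) with t.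
    change (INR 0) with 0. change (Factorial.fact 0) with 1%nat. change (INR 1) with 1. rewrite Rinv_0, ln0, !Rplus_0_r, !Rplus_0_l, ln_1. rring.
  - unfold hk in *. rewrite sum_Sn, IH. change (plus ?a ?b) with (a + b).
    cbn beta iota delta [aterm].
    change (poch t (S n)) with (poch t n * (t + INR (S n))). rewrite Rabs_mult.
    assert (H1 : 0 < Rabs (poch t n)) by (apply Rabs_pos_lt, poch_neq0, H).
    assert (H2 : 0 < Rabs (t + INR (S n))) by (apply Rabs_pos_lt, H).
    rewrite ln_mult by lra.
    change (Factorial.fact (S n)) with (S n * Factorial.fact n)%nat.
    rewrite mult_INR. pose proof (INR_fact_lt_0 n).
    assert (0 < INR (S n)) by (apply lt_0_INR; lia).
    rewrite ln_mult by lra.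
    assert (E : ln (INR (S n) + 1) = ln (INR n + 1) + ln (1 + / INR (S n))).
    { rewrite <- ln_mult.
      - f_equal. rewrite S_INR. field. pose proof (pos_INR n). lra.
      - rewrite S_INR in *. lra.
      - assert (0 < / INR (S n)) by (apply Rinv_0_lt_compat; lra). lra. }
    rewrite E. rring.
Qed.

Lemma Boule_open c (r : posreal) : open (Boule c r).
Proof.
  intros x Hx. unfold Boule in Hx.
  assert (Hp : 0 < r - Rabs (x - c)) by lra.
  exists (mkposreal _ Hp). intros y Hy.
  change (Rabs (y - x) < r - Rabs (x - c)) in Hy.
  unfold Boule. replace (y - c) with ((y - x) + (x - c)) by ring.
  eapply Rle_lt_trans. apply Rabs_triang. lra.
Qed.

Lemma gamma_local x0 : (forall n, x0 <> - INR n) ->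
  exists (d : posreal) (sg : R) (Lam : nat -> R -> R),
    (sg = 1 \/ sg = -1) /\ Dseq Lam (Boule x0 d) /\
    forall t, Boule x0 d t -> Gamma t = sg * exp (Lam O t).
Proof.
  intros Hx0.
  destruct (delta_exists x0 Hx0) as [d0 [Hd0 Hj0]].
  set (d := mkposreal d0 (proj1 Hd0)).
  set (R0 := Rabs x0 + 1).
  assert (HR0 : 1 <= R0) by (pose proof (Rabs_pos x0); unfold R0; lra).
  destruct (INR_unbounded (2 * R0 + 2)) as [J HJ].
  assert (HJ1 : (1 <= J)%nat).
  { destruct J; [simpl in HJ; lra|lia]. }
  assert (Hb1 : forall t, Boule x0 d t -> Rabs t <= R0).
  { intros t Ht. unfold Boule in Ht. simpl in Ht. unfold R0.
    replace t with ((t - x0) + x0) by ring. eapply Rle_trans. apply Rabs_triang. lra. }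
  assert (Hb2 : forall t j, Boule x0 d t -> 0 < (t + INR j) * (x0 + INR j)).
  { intros t j Ht. unfold Boule in Ht. simpl in Ht. specialize (Hj0 j).
    apply Rabs_def2 in Ht.
    destruct (Rlt_or_le 0 (x0 + INR j)) as [H|H].
    - rewrite Rabs_right in Hj0 by lra. nra.
    - rewrite Rabs_left1 in Hj0 by lra. nra. }
  assert (Hb3 : forall t j, Boule x0 d t -> t + INR j <> 0).
  { intros t j Ht E. specialize (Hb2 t j Ht). rewrite E in Hb2. lra. }
  assert (HC : forall k, CVU_cauchy (hk k) (Boule x0 d)).
  { intros k. destruct (aterm_bound k R0 HR0) as [K [HK HKb]].
    unfold hk. apply (ucauchy (aterm k) _ K J HK HJ1).
    intros j x Hj Hx. apply HKb; [|apply Hb1, Hx].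
    apply le_INR in Hj. lra. }
  assert (HU : forall k, CVU_dom (hk k) (Boule x0 d)) by (intros k; apply CVU_dom_cauchy, HC).
  assert (HS : forall k, CVS_dom (hk k) (Boule x0 d)) by (intros k; apply CVU_CVS_dom, HU).
  set (Lam := fun k x => real (Lim_seq (fun n => hk k n x))).
  assert (Hlim : forall k x, Boule x0 d x -> is_lim_seq (fun n => hk k n x) (Lam k x)).
  { intros k x Hx. unfold Lam. pose proof (HS k x Hx) as [l Hl].
    rewrite (is_lim_seq_unique _ _ Hl). exact Hl. }
  assert (HD : Dseq Lam (Boule x0 d)).
  { intros k x Hx. apply is_derive_Reals.
    apply (CVU_derivable (hk k) (hk (S k)) (Lam k) (Lam (S k)) x0 d).
    - apply (CVU_dom_Reals (hk (S k)) (Lam (S k)) x0 d); [|apply HU].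
      intros y Hy. symmetry. apply is_lim_seq_unique, Hlim, Hy.
    - intros y Hy. apply is_lim_seq_Reals, Hlim, Hy.
    - intros n y Hy. apply is_derive_Reals. apply hk_deriv. intros j; apply Hb3, Hy.
    - exact Hx. }
  set (sg := poch x0 J / Rabs (poch x0 J)).
  assert (Hx0J : forall j, (J <= j)%nat -> 0 < x0 + INR j).
  { intros j Hj. apply le_INR in Hj. pose proof (Rabs_le_b x0 (Rabs x0) (Rle_refl _)).
    unfold R0 in HJ. lra. }
  assert (Hsg : forall n, (J <= n)%nat -> poch x0 n / Rabs (poch x0 n) = sg).
  { intros n Hn. induction n as [|n IH]; [assert (J = O) by lia; subst; reflexivity|].
    destruct (Nat.eq_dec J (S n)) as [<-|Hne]; [reflexivity|].
    rewrite <- IH by lia.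
    change (poch x0 (S n)) with (poch x0 n * (x0 + INR (S n))).
    apply samesign.
    assert (0 < x0 + INR (S n)) by (apply Hx0J; lia).
    assert (0 < poch x0 n * poch x0 n).
    { pose proof (poch_neq0 x0 n (fun j => Hb3 x0 j ltac:(unfold Boule; rewrite Rminus_diag, Rabs_R0; apply cond_pos))).
      nra. }
    nra. }
  assert (Hsg1 : sg = 1 \/ sg = -1).
  { unfold sg. assert (Hp : poch x0 J <> 0).
    { apply poch_neq0. intros j. apply Hb3. unfold Boule. rewrite Rminus_diag, Rabs_R0. apply cond_pos. }
    destruct (Rlt_or_le 0 (poch x0 J)).
    - left. rewrite Rabs_right by lra. field. exact Hp.
    - right. rewrite Rabs_left by lra. field. exact Hp. }
  exists d, sg, Lam. split; [exact Hsg1|]. split; [exact HD|].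
  intros t Ht.
  assert (Hln : is_lim_seq (fun n => ln (INR n) - ln (INR n + 1)) 0).
  { apply (is_lim_seq_ext_loc (fun n => - ln (1 + / INR n))).
    - exists 1%nat. intros n Hn. assert (0 < INR n) by (apply lt_0_INR; lia).
      replace (INR n + 1) with (INR n * (1 + / INR n)) by (field; lra).
      rewrite ln_mult. ring. lra.
      assert (0 < / INR n) by (apply Rinv_0_lt_compat; lra). lra.
    - replace (Finite 0) with (Finite (- ln 1)) by (rewrite ln_1; f_equal; ring).
      apply (is_lim_seq_continuous (fun x => - ln x)).
      + apply (derive_cont _ _ (0 - / 1)). apply (is_derive_ext (fun x => 0 - ln x)).
        intros; rring. apply is_derive_Rminus. apply is_derive_Rconst. apply is_derive_ln. lra.
      + assert (H1 : is_lim_seq (fun n => 1 + / INR n) (1 + 0)).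
        { apply is_lim_seq_plus'. apply is_lim_seq_const.
          replace (Finite 0) with (Rbar_inv p_infty) by reflexivity.
          apply is_lim_seq_inv. apply is_lim_seq_INR. discriminate. }
        rewrite Rplus_0_r in H1. exact H1. }
  assert (Hmain : is_lim_seq (fun n => sg * exp (hk O n t + t * (ln (INR n) - ln (INR n + 1))))
                    (sg * exp (Lam O t))).
  { replace (Finite (sg * exp (Lam O t))) with (Rbar_mult sg (exp (Lam O t + t * 0)))
      by (simpl; f_equal; f_equal; f_equal; ring).
    apply is_lim_seq_scal_l. apply (is_lim_seq_continuous exp).
    - apply (derive_cont _ _ (exp (Lam O t + t * 0))). apply is_derive_exp.
    - apply is_lim_seq_plus'. apply Hlim, Ht.
      replace (Finite (t * 0)) with (Rbar_mult t 0) by reflexivity.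
      apply is_lim_seq_scal_l. exact Hln. }
  unfold Gamma. rewrite (is_lim_seq_unique (gauss_term t) (sg * exp (Lam O t))).
  { reflexivity. }
  apply (is_lim_seq_ext_loc (fun n => sg * exp (hk O n t + t * (ln (INR n) - ln (INR n + 1))))).
  2: exact Hmain.
  exists J. intros n Hn.
  rewrite hk0_closed by (intros j; apply Hb3, Ht).
  assert (Hp : poch t n <> 0) by (apply poch_neq0; intros j; apply Hb3, Ht).
  assert (Ha : 0 < Rabs (poch t n)) by (apply Rabs_pos_lt, Hp).
  pose proof (INR_fact_lt_0 n) as HF.
  assert (Hn0 : 0 < INR n) by (apply lt_0_INR; lia).
  replace (t * ln (INR n + 1) - ln (Rabs (poch t n)) + ln (INR (Factorial.fact n)) +
      t * (ln (INR n) - ln (INR n + 1)))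
    with (t * ln (INR n) + - ln (Rabs (poch t n)) + ln (INR (Factorial.fact n))) by ring.
  rewrite !exp_plus, exp_Ropp, !exp_ln by lra.
  assert (Es : sg = poch t n / Rabs (poch t n)).
  { rewrite <- (Hsg n Hn). apply samesign. rewrite Rmult_comm.
    apply (poch_pos_prod t x0 n). intros j; apply Hb2, Ht. }
  rewrite Es. unfold gauss_term, Rpower.
  assert (Ea : Rabs (poch t n) * Rabs (poch t n) = poch t n * poch t n).
  { rewrite <- Rabs_mult. apply Rabs_right. nra. }
  set (p := poch t n) in *. set (a := Rabs p) in *. set (e := exp (t * ln (INR n))).
  replace (p / a * (e * / a * INR (Factorial.fact n))) with
    (p * (e * INR (Factorial.fact n)) / (a * a)) by (field; lra).
  rewrite Ea. field. exact Hp.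
Qed.

Lemma poly_link x0 (d : posreal) s Lam : (s = 1 \/ s = -1) -> Dseq Lam (Boule x0 d) ->
  (forall t, Boule x0 d t -> Gamma t = s * exp (Lam O t)) ->
  forall n z, Boule x0 d z -> polygamma n z = Lam (S n) z.
Proof.
  intros Hs HD HG n z Hz. unfold polygamma.
  rewrite (Derive_n_ext_loc _ (Lam O)).
  - apply (Dseq_Derive_n Lam _ (Boule_open x0 d) HD (S n) z Hz).
  - apply (locally_open (Boule x0 d)); [apply Boule_open| |exact Hz].
    intros t Ht. rewrite HG by exact Ht. rewrite Rabs_mult.
    rewrite (Rabs_right (exp _)) by (apply Rle_ge, Rlt_le, exp_pos).
    replace (Rabs s) with 1 by (destruct Hs as [-> | ->]; unfold Rabs; destruct Rcase_abs; lra).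
    rewrite Rmult_1_l, ln_exp. reflexivity.
Qed.

Theorem theorem3 (k m : R) (p : nat)
  (H1 : forall n : nat, 2 * m + 1 <> - INR n)
  (H2 : forall n : nat, m + 1 + k <> - INR n)
  (H3 : forall n : nat, m + 1 - k <> - INR n) :
  Derive_n (Cfun k) p m =
    (-1) ^ p * binomR (2 * m) (m + k) *
    sum_n (fun i => Binomial.C p i * (Delta_j k m 1) ^ (p - i) * xseq (Delta_j k m) i) p
  /\
  Derive_n (CLfun k) p m =
    (-1) ^ p * (binomR (2 * m) (m + k) / Rpower 4 m) *
    sum_n (fun i => Binomial.C p i * (Delta_j k m 1 + ln 4) ^ (p - i) * xseq (Delta_j k m) i) p.
Proof.
  destruct (gamma_local _ H1) as [d1 [s1 [L1 [Hs1 [HD1 HG1]]]]].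
  destruct (gamma_local _ H2) as [d2 [s2 [L2 [Hs2 [HD2 HG2]]]]].
  destruct (gamma_local _ H3) as [d3 [s3 [L3 [Hs3 [HD3 HG3]]]]].
  pose proof (poly_link _ _ _ _ Hs1 HD1 HG1) as P1.
  pose proof (poly_link _ _ _ _ Hs2 HD2 HG2) as P2.
  pose proof (poly_link _ _ _ _ Hs3 HD3 HG3) as P3.
  assert (Hr : 0 < Rmin (d1 / 2) (Rmin d2 d3)).
  { pose proof (cond_pos d1). pose proof (cond_pos d2). pose proof (cond_pos d3).
    apply Rmin_glb_lt; [lra|]. apply Rmin_glb_lt; lra. }
  set (r := mkposreal _ Hr).
  set (U := Boule m r).
  assert (HU1 : forall t, U t -> Boule (2 * m + 1) d1 (2 * t + 1)).
  { intros t Ht. unfold U, Boule in *. simpl in Ht.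
    pose proof (Rmin_l (d1 / 2) (Rmin d2 d3)).
    replace (2 * t + 1 - (2 * m + 1)) with (2 * (t - m)) by ring.
    rewrite Rabs_mult, Rabs_right by lra. lra. }
  assert (HU2 : forall t, U t -> Boule (m + 1 + k) d2 (1 * t + (1 + k))).
  { intros t Ht. unfold U, Boule in *. simpl in Ht.
    pose proof (Rmin_r (d1 / 2) (Rmin d2 d3)). pose proof (Rmin_l d2 d3).
    replace (1 * t + (1 + k) - (m + 1 + k)) with (t - m) by ring. lra. }
  assert (HU3 : forall t, U t -> Boule (m + 1 - k) d3 (1 * t + (1 - k))).
  { intros t Ht. unfold U, Boule in *. simpl in Ht.
    pose proof (Rmin_r (d1 / 2) (Rmin d2 d3)). pose proof (Rmin_r d2 d3).
    replace (1 * t + (1 - k) - (m + 1 - k)) with (t - m) by ring. lra. }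
  set (L := fun n t => 2 ^ n * L1 n (2 * t + 1) - 1 ^ n * L2 n (1 * t + (1 + k))
                       - 1 ^ n * L3 n (1 * t + (1 - k))).
  assert (HL : Dseq L U).
  { unfold L. apply Dseq_minus; [apply Dseq_minus|].
    - apply (Dseq_sub _ (fun t => Boule (2 * m + 1) d1 (2 * t + 1))).
      apply Dseq_affine, HD1. exact HU1.
    - apply (Dseq_sub _ (fun t => Boule (m + 1 + k) d2 (1 * t + (1 + k)))).
      apply Dseq_affine, HD2. exact HU2.
    - apply (Dseq_sub _ (fun t => Boule (m + 1 - k) d3 (1 * t + (1 - k)))).
      apply Dseq_affine, HD3. exact HU3. }
  assert (HUo : open U) by apply Boule_open.
  assert (HUm : U m) by (unfold U, Boule; rewrite Rminus_diag, Rabs_R0; apply cond_pos).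
  assert (HLj : forall j, (1 <= j)%nat -> L j m = (-1) ^ j * Delta_j k m j).
  { intros j Hj. destruct j as [|j]; [lia|].
    unfold L, Delta_j. replace (S j - 1)%nat with j by lia.
    rewrite <- (P1 j (2 * m + 1)) by (apply HU1, HUm).
    rewrite <- (P2 j (1 * m + (1 + k))) by (apply HU2, HUm).
    rewrite <- (P3 j (1 * m + (1 - k))) by (apply HU3, HUm).
    replace (1 * m + (1 + k)) with (m + 1 + k) by ring.
    replace (1 * m + (1 - k)) with (m + 1 - k) by ring.
    assert (E : (-1) ^ S j * (-1) ^ S j = 1).
    { rewrite <- Rpow_mult_distr. replace ((-1) * (-1)) with 1 by ring. apply pow1. }
    rewrite pow1. rewrite <- Rmult_assoc, E. ring. }
  set (S := s1 * s2 * s3).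
  assert (HC : forall t, U t -> Cfun k t = S * exp (L O t)).
  { intros t Ht. unfold Cfun, binomR, L, S.
    replace (t + k + 1) with (1 * t + (1 + k)) by ring.
    replace (2 * t - (t + k) + 1) with (1 * t + (1 - k)) by ring.
    rewrite (HG1 _ (HU1 t Ht)), (HG2 _ (HU2 t Ht)), (HG3 _ (HU3 t Ht)).
    simpl pow. rewrite !Rmult_1_l.
    match goal with |- _ = _ * exp (?a - ?b - ?c) =>
      replace (a - b - c) with (a + - b + - c) by ring;
      pose proof (exp_pos b); pose proof (exp_pos c) end.
    rewrite !exp_plus, !exp_Ropp.
    destruct Hs2 as [-> | ->]; destruct Hs3 as [-> | ->]; field; lra. }
  assert (HlocC : locally m (fun t => Cfun k t = S * exp (L O t))).
  { apply (locally_open U); [exact HUo| exact HC | exact HUm]. }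
  assert (HB : binomR (2 * m) (m + k) = S * exp (L O m)).
  { change (binomR (2 * m) (m + k)) with (Cfun k m). apply HC, HUm. }
  split.
  - rewrite (Derive_n_ext_loc _ _ p m HlocC).
    rewrite Derive_n_scal_l.
    rewrite (exp_formula L U m p (Delta_j k m) (Delta_j k m 1) HUo HUm HL).
    + rewrite HB. ring.
    + rewrite HLj by lia. ring.
    + intros j Hj. apply HLj. lia.
  - set (L' := fun n t => L n t - linseq (ln 4) 0 n t).
    assert (HL' : Dseq L' U) by (apply Dseq_minus; [exact HL|apply Dseq_lin]).
    assert (HCL : forall t, U t -> CLfun k t = S * exp (L' O t)).
    { intros t Ht. change (CLfun k t) with (Cfun k t / Rpower 4 t).
      rewrite HC by exact Ht. unfold Rpower, L', linseq.
      replace (L O t - ln 4 * (t - 0)) with (L O t + - (t * ln 4)) by ring.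
      rewrite exp_plus, exp_Ropp. field. apply Rgt_not_eq, exp_pos. }
    assert (HlocCL : locally m (fun t => CLfun k t = S * exp (L' O t))).
    { apply (locally_open U); [exact HUo| exact HCL | exact HUm]. }
    assert (HBL : binomR (2 * m) (m + k) / Rpower 4 m = S * exp (L' O m)).
    { change (binomR (2 * m) (m + k) / Rpower 4 m) with (CLfun k m). apply HCL, HUm. }
    rewrite (Derive_n_ext_loc _ _ p m HlocCL).
    rewrite Derive_n_scal_l.
    rewrite (exp_formula L' U m p (Delta_j k m) (Delta_j k m 1 + ln 4) HUo HUm HL').
    + rewrite HBL. ring.
    + unfold L', linseq. rewrite HLj by lia. ring.
    + intros j Hj. unfold L', linseq. destruct j as [|[|j]]; try lia. rewrite HLj by lia. ring.
Qed.
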